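(* Let $d\ge2$ and $\gamma>3/4$. Then $\Lambda_0(\gamma,d)>\frac{(d-1)(\gamma-\frac34)}{2(\gamma-\frac14)\,\mathsf N_0(\gamma)^{\frac{4\gamma}{4\gamma-1}}-2(\gamma-\frac34)}$.
   Context: $\mathsf N_0(\gamma)=2^{1-\frac3{4\gamma}}e^{\frac1{4\gamma}}\frac{(2\gamma-1)^{1-\frac1\gamma}}{(4\gamma-1)^{1-\frac3{4\gamma}}}\Big(\frac{\Gamma(2\gamma-\frac12)}{\Gamma(2\gamma-1)}\Big)^{\frac1{2\gamma}}$; $\beta_0=1-\frac1{4\gamma}$; $\mathsf x_0^*(\gamma)$ is the smallest root $x>\mathsf N_0^{1/\beta_0}$ of $4\gamma x^{\beta_0+1}-(8\gamma-3)\mathsf N_0x+(4\gamma-3)\mathsf N_0=0$ with $\mathsf N_0=\mathsf N_0(\gamma)$; $\Lambda_0(\gamma,d)=\frac{(d-1)(\gamma-3/4)}{\mathsf x_0^*(\gamma)}$. *)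

(* Defs.v *)
From Stdlib Require Import Reals.
From Coquelicot Require Import Coquelicot.
Open Scope R_scope.

Definition Gamma (s : R) : R :=
  RInt_gen (fun t => Rpower t (s - 1) * exp (- t)) (at_right 0) (Rbar_locally p_infty).

Definition N0_gamma (g : R) : R :=
  Rpower 2 (1 - 3 / (4 * g)) * exp (1 / (4 * g))
  * Rpower (2 * g - 1) (1 - 1 / g) / Rpower (4 * g - 1) (1 - 3 / (4 * g))
  * Rpower (Gamma (2 * g - 1 / 2) / Gamma (2 * g - 1)) (1 / (2 * g)).

Definition beta0 (g : R) : R := 1 - 1 / (4 * g).

Definition F0 (g x : R) : R :=
  4 * g * Rpower x (beta0 g + 1) - (8 * g - 3) * N0_gamma g * x + (4 * g - 3) * N0_gamma g.

Definition x0_roots (g : R) (x : R) : Prop :=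
  Rpower (N0_gamma g) (1 / beta0 g) < x /\ F0 g x = 0.

Definition x0_star (g : R) : R := real (Glb_Rbar (x0_roots g)).

Definition Lambda0 (g : R) (d : nat) : R := (INR d - 1) * (g - 3 / 4) / x0_star g.

(* Main.v *)
Require Import Defs.
From Stdlib Require Import Reals Lra Psatz.
From Coquelicot Require Import Coquelicot.
Open Scope R_scope.

Definition fg (s t : R) : R := Rpower t (s - 1) * exp (- t).

Lemma Rpower_pos x y : 0 < Rpower x y.
Proof. unfold Rpower; apply exp_pos. Qed.

Lemma ln_le_xm1 x : 0 < x -> ln x <= x - 1.
Proof.
  intros Hx. pose proof (exp_ineq1_le (ln x)) as H.
  rewrite exp_ln in H by lra. lra.
Qed.

Lemma is_derive_Rpower x c : 0 < x -> is_derive (fun y => Rpower y c) x (c * Rpower x (c - 1)).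
Proof. intros; apply is_derive_Reals, derivable_pt_lim_power; auto. Qed.

Lemma Rpower_cont x c : 0 < x -> continuous (fun y => Rpower y c) x.
Proof. intros. apply (@ex_derive_continuous R_AbsRing R_NormedModule). eexists. apply is_derive_Rpower; auto. Qed.

Lemma fg_cont s t : 0 < t -> continuous (fg s) t.
Proof.
  intros Ht. apply (@ex_derive_continuous R_AbsRing R_NormedModule). unfold fg. auto_derive; auto.
  eexists. apply is_derive_Rpower; auto.
Qed.

Lemma fg_ex_RInt s a b : 0 < a -> 0 < b -> ex_RInt (fg s) a b.
Proof.
  intros. apply (@ex_RInt_continuous R_CompleteNormedModule). intros z Hz. apply fg_cont.
  assert (0 < Rmin a b) by (apply Rmin_glb_lt; auto). lra.
Qed.

Lemma fg_pos s t : 0 < fg s t.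
Proof. unfold fg. apply Rmult_lt_0_compat; [apply Rpower_pos|apply exp_pos]. Qed.

Lemma exp_le_mono x y : x <= y -> exp x <= exp y.
Proof. intros [H|H]; [left; apply exp_increasing; auto| right; subst; auto]. Qed.

Lemma fg_bound s : exists C, 0 < C /\ forall t, 1 <= t -> fg s t <= C * exp (- t / 2).
Proof.
  set (k := Rabs (s - 1) + 1).
  assert (Hk : 0 < k) by (unfold k; pose proof (Rabs_pos (s-1)); lra).
  exists (exp (k * ln (4 * k))). split; [apply exp_pos|].
  intros t Ht. unfold fg, Rpower. rewrite <- exp_plus, <- exp_plus. apply exp_le_mono.
  assert (Hl0 : 0 <= ln t) by (rewrite <- ln_1; apply ln_le; lra).
  assert (Hs : s - 1 <= k) by (unfold k; pose proof (Rle_abs (s-1)); lra).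
  assert (H1 : ln t <= ln (4*k) + t/(4*k) - 1).
  { replace t with (4*k * (t/(4*k))) at 1 by (field; lra).
    rewrite ln_mult by (try apply Rdiv_lt_0_compat; lra).
    pose proof (ln_le_xm1 (t/(4*k)) ltac:(apply Rdiv_lt_0_compat; lra)). lra. }
  assert (H2 : k * ln t <= k * ln (4*k) + t/4 - k).
  { apply Rmult_le_compat_l with (r := k) in H1; [|lra].
    replace (k * (ln (4 * k) + t / (4 * k) - 1)) with (k * ln (4*k) + t/4 - k) in H1 by (field; lra).
    exact H1. }
  assert ((s-1) * ln t <= k * ln t) by (apply Rmult_le_compat_r; lra).
  lra.
Qed.

Lemma mono_lim_pinfty (F : R -> R) (M : R) :
  (forall x y, 1 <= x <= y -> F x <= F y) -> (forall x, 1 <= x -> F x <= M) ->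
  exists L, filterlim F (Rbar_locally p_infty) (locally L) /\ (forall x, 1 <= x -> F x <= L).
Proof.
  intros Hm Hb.
  set (E := fun r => exists x, 1 <= x /\ r = F x).
  destruct (completeness E) as [L [HL1 HL2]].
  - exists M. intros r [x [Hx ->]]. apply Hb; auto.
  - exists (F 1). exists 1. split; [lra|auto].
  - assert (Hup : forall x, 1 <= x -> F x <= L) by (intros x Hx; apply HL1; exists x; auto).
    exists L. split; auto.
    apply filterlim_locally. intros eps.
    assert (Hex : exists x0, 1 <= x0 /\ L - eps < F x0).
    { destruct (Classical_Prop.classic (exists x0, 1 <= x0 /\ L - eps < F x0)) as [H|H]; auto.
      exfalso. assert (L <= L - eps).
      { apply HL2. intros r [x [Hx ->]]. destruct (Rle_lt_dec (F x) (L - eps)); auto.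
        exfalso; apply H; exists x; auto. }
      destruct eps; simpl in *; lra. }
    destruct Hex as [x0 [Hx0 Hx0']].
    exists x0. intros x Hx. change (Rabs (F x - L) < eps).
    assert (F x0 <= F x) by (apply Hm; lra). assert (F x <= L) by (apply Hup; lra).
    apply Rabs_lt_between'. lra.
Qed.

Lemma mono_lim_0 (F : R -> R) (m : R) :
  (forall x y, 0 < x <= y -> y <= 1 -> F x <= F y) -> (forall x, 0 < x <= 1 -> m <= F x) ->
  exists L, filterlim F (at_right 0) (locally L) /\ (forall x, 0 < x <= 1 -> L <= F x).
Proof.
  intros Hm Hb.
  set (E := fun r => exists x, 0 < x <= 1 /\ r = - F x).
  destruct (completeness E) as [L [HL1 HL2]].
  - exists (-m). intros r [x [Hx ->]]. specialize (Hb x Hx). lra.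
  - exists (- F 1). exists 1. split; [lra|auto].
  - assert (Hup : forall x, 0 < x <= 1 -> - F x <= L) by (intros x Hx; apply HL1; exists x; auto).
    exists (-L). split; [|intros x Hx; specialize (Hup x Hx); lra].
    apply filterlim_locally. intros eps.
    assert (Hex : exists x0, 0 < x0 <= 1 /\ L - eps < - F x0).
    { destruct (Classical_Prop.classic (exists x0, 0 < x0 <= 1 /\ L - eps < - F x0)) as [H|H]; auto.
      exfalso. assert (L <= L - eps).
      { apply HL2. intros r [x [Hx ->]]. destruct (Rle_lt_dec (- F x) (L - eps)); auto.
        exfalso; apply H; exists x; auto. }
      destruct eps; simpl in *; lra. }
    destruct Hex as [x0 [Hx0 Hx0']].
    assert (Hx0p : 0 < x0) by lra.
    exists (mkposreal x0 Hx0p). intros x Hx Hxp. change (Rabs (x - 0) < x0) in Hx.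
    change (Rabs (F x - - L) < eps).
    rewrite Rminus_0_r in Hx. apply Rabs_lt_between in Hx.
    assert (F x <= F x0) by (apply Hm; lra). assert (- F x <= L) by (apply Hup; lra).
    apply Rabs_lt_between'. lra.
Qed.

Lemma at_right_pos : at_right 0 (fun x => 0 < x).
Proof. exists (mkposreal 1 Rlt_0_1). intros y _ Hy. exact Hy. Qed.

Lemma pinfty_pos : Rbar_locally p_infty (fun x => 0 < x).
Proof. exists 0. intros x Hx. exact Hx. Qed.

Lemma prod_pos (P : R * R -> Prop) :
  (forall a b, 0 < a -> 0 < b -> P (a, b)) ->
  filter_prod (at_right 0) (Rbar_locally p_infty) P.
Proof.
  intros H. apply Filter_prod with (fun x => 0 < x) (fun x => 0 < x).
  - apply at_right_pos.
  - apply pinfty_pos.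
  - intros; apply H; auto.
Qed.

Lemma RInt_Chasles_R (f : R -> R) a b c :
  ex_RInt f a b -> ex_RInt f b c -> RInt f a b + RInt f b c = RInt f a c.
Proof. intros H1 H2. exact (RInt_Chasles (V := R_CompleteNormedModule) f a b c H1 H2). Qed.

Lemma Gamma_is (s : R) : 0 < s ->
  exists l, 0 < l /\ is_RInt_gen (fg s) (at_right 0) (Rbar_locally p_infty) l.
Proof.
  intros Hs.
  set (F := fun x => RInt (fg s) 1 x).
  assert (HF : forall x y, 0 < x -> 0 < y -> F y - F x = RInt (fg s) x y).
  { intros x y Hx Hy. unfold F.
    rewrite <- (RInt_Chasles_R (fg s) 1 x y) by (apply fg_ex_RInt; lra). ring. }
  assert (HF1 : F 1 = 0) by (unfold F; apply (RInt_point (V := R_CompleteNormedModule))).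
  assert (Hmono : forall x y, 0 < x <= y -> F x <= F y).
  { intros x y Hxy. assert (0 <= RInt (fg s) x y).
    { apply RInt_ge_0; [lra| apply fg_ex_RInt; lra|]. intros; left; apply fg_pos. }
    rewrite <- HF in H by lra. lra. }
  destruct (fg_bound s) as [C [HC HCb]].
  assert (Hup : forall x, 1 <= x -> F x <= 2 * C * exp (-1/2)).
  { intros x Hx.
    assert (Hi : is_RInt (fun t => C * exp (- t / 2)) 1 x
                   (minus ((fun t => -2 * C * exp (- t / 2)) x) ((fun t => -2 * C * exp (- t / 2)) 1))).
    { apply (is_RInt_derive (V := R_CompleteNormedModule) (fun t => -2 * C * exp (- t / 2)) (fun t => C * exp (- t / 2)) 1 x).
      - intros t _. auto_derive; auto. set (E := exp (- t / 2)). change (-2 * C * (- (1) * / 2 * E) = C * E). field.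
      - intros t _. apply (@ex_derive_continuous R_AbsRing R_NormedModule). auto_derive; auto. }
    assert (Hex : ex_RInt (fun t => C * exp (- t / 2)) 1 x) by (eexists; exact Hi).
    apply (is_RInt_unique (V := R_CompleteNormedModule)) in Hi.
    assert (F x <= RInt (fun t => C * exp (- t / 2)) 1 x).
    { unfold F. apply RInt_le; auto.
      - apply fg_ex_RInt; lra.
      - intros t Ht. apply HCb. lra. }
    rewrite Hi in H. simpl in H. unfold minus, plus, opp in H; simpl in H.
    pose proof (exp_pos (-x/2)).
    replace (-1/2) with (-(1)/2) by field. nra. }
  assert (Hlo : forall x, 0 < x <= 1 -> - (1/s) <= F x).
  { intros x Hx.
    assert (Hi : is_RInt (fun t => Rpower t (s - 1)) x 1
                   (minus ((fun t => Rpower t s / s) 1) ((fun t => Rpower t s / s) x))).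
    { apply (is_RInt_derive (V := R_CompleteNormedModule) (fun t => Rpower t s / s) (fun t => Rpower t (s - 1)) x 1).
      - intros t Ht. assert (0 < t) by (pose proof (Rmin_l x 1); pose proof (Rmin_r x 1); destruct Hx; 
           assert (Rmin x 1 > 0) by (apply Rmin_glb_lt; lra); lra).
        auto_derive.
        * eexists; apply is_derive_Rpower; auto.
        * replace (Derive (fun x0 : R => Rpower x0 s) t) with (s * Rpower t (s-1)) by (symmetry; apply is_derive_unique, is_derive_Rpower; auto). field. lra.
      - intros t Ht. apply Rpower_cont. assert (Rmin x 1 > 0) by (apply Rmin_glb_lt; lra). lra. }
    assert (Hex : ex_RInt (fun t => Rpower t (s-1)) x 1) by (eexists; exact Hi).
    apply (is_RInt_unique (V := R_CompleteNormedModule)) in Hi.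
    simpl in Hi. unfold minus, plus, opp in Hi; simpl in Hi.
    assert (Hle : RInt (fg s) x 1 <= RInt (fun t => Rpower t (s-1)) x 1).
    { apply RInt_le; [lra | apply fg_ex_RInt; lra | exact Hex |]. intros t Ht. unfold fg.
      assert (exp (-t) < 1) by (rewrite <- exp_0; apply exp_increasing; lra).
      pose proof (Rpower_pos t (s-1)). pose proof (exp_pos (-t)). nra. }
    rewrite Hi in Hle. assert (H1 : Rpower 1 s = 1) by (unfold Rpower; rewrite ln_1, Rmult_0_r; apply exp_0).
    rewrite H1 in Hle.
    pose proof (HF x 1 ltac:(lra) ltac:(lra)). rewrite HF1 in H.
    assert (0 < Rpower x s / s) by (apply Rdiv_lt_0_compat; [apply Rpower_pos|lra]).
    unfold Rdiv in *. lra. }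
  destruct (mono_lim_pinfty F (2*C*exp(-1/2))) as [Lb [HLb HLb']].
  { intros x y H; apply Hmono; lra. } { exact Hup. }
  destruct (mono_lim_0 F (-(1/s))) as [La [HLa HLa']].
  { intros x y H _; apply Hmono; lra. } { exact Hlo. }
  assert (Hder : forall x, 0 < x -> is_derive F x (fg s x)).
  { intros x Hx. apply (is_derive_RInt (V := R_NormedModule) (fg s) F 1 x).
    - assert (Hx2 : 0 < x/2) by lra. exists (mkposreal (x/2) Hx2). intros y Hy.
      change (Rabs (y - x) < x/2) in Hy. apply Rabs_lt_between in Hy.
      apply (RInt_correct (V := R_CompleteNormedModule)), fg_ex_RInt; lra.
    - apply fg_cont; auto. }
  exists (Lb - La). split.
  - assert (H2 : 0 < F 2).
    { rewrite <- (Rminus_0_r (F 2)), <- HF1, HF by lra.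
      assert (Hl := RInt_lt (fun _ => 0) (fg s) 1 2 ltac:(lra)
                 ltac:(intros; apply fg_cont; lra)
                 ltac:(intros; apply (@continuous_const R_UniformSpace R_UniformSpace))
                 ltac:(intros; apply fg_pos)).
      rewrite (RInt_const (V := R_CompleteNormedModule)) in Hl. simpl in Hl.
      unfold scal in Hl; simpl in Hl; unfold mult in Hl; simpl in Hl. lra. }
    specialize (HLb' 2 ltac:(lra)). specialize (HLa' 1 ltac:(lra)). lra.
  - apply (is_RInt_gen_ext (Derive F)).
    { apply prod_pos. intros a b Ha Hb x Hx. simpl in Hx.
      assert (Rmin a b > 0) by (apply Rmin_glb_lt; lra).
      apply is_derive_unique, Hder. lra. }
    apply is_RInt_gen_Derive.
    + apply prod_pos. intros a b Ha Hb x Hx. simpl in Hx.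
      assert (Rmin a b > 0) by (apply Rmin_glb_lt; lra).
      eexists. apply Hder. lra.
    + apply prod_pos. intros a b Ha Hb x Hx. simpl in Hx.
      assert (Rmin a b > 0) by (apply Rmin_glb_lt; lra).
      apply (continuous_ext_loc (Derive F) (fg s) x).
      * assert (Hx2 : 0 < x/2) by lra. exists (mkposreal (x/2) Hx2). intros y Hy.
        change (Rabs (y - x) < x/2) in Hy. apply Rabs_lt_between in Hy.
        symmetry. apply is_derive_unique, Hder. lra.
      * apply fg_cont. lra.
    + exact HLa.
    + exact HLb.
Qed.

Lemma Gamma_val s l : is_RInt_gen (fg s) (at_right 0) (Rbar_locally p_infty) l -> Gamma s = l.
Proof.
  intros H. unfold Gamma.
  exact (@is_RInt_gen_unique R_CompleteNormedModule (at_right 0) (Rbar_locally p_infty)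
          (Proper_StrongProper _ (at_right_proper_filter 0))
          (Proper_StrongProper _ (Rbar_locally_filter p_infty)) (fg s) l H).
Qed.

Lemma Gamma_spec s : 0 < s -> 0 < Gamma s /\ is_RInt_gen (fg s) (at_right 0) (Rbar_locally p_infty) (Gamma s).
Proof.
  intros Hs. destruct (Gamma_is s Hs) as [l [Hl H]]. rewrite (Gamma_val s l H). auto.
Qed.

Lemma RInt_gen_nonneg (h : R -> R) v :
  is_RInt_gen h (at_right 0) (Rbar_locally p_infty) v -> (forall t, 0 < t -> 0 <= h t) -> 0 <= v.
Proof.
  intros H Hh. destruct (Rle_lt_dec 0 v) as [|Hv]; auto. exfalso.
  assert (He : 0 < - v / 2) by lra.
  specialize (H (ball v (mkposreal _ He)) (locally_ball v (mkposreal _ He))).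
  destruct H as [Q R' HQ HR Hqr].
  destruct HQ as [d Hd]. destruct HR as [M HM].
  set (a := d / 2). set (b := Rmax M d + 1).
  assert (Ha : 0 < a) by (unfold a; destruct d; simpl; lra).
  assert (Hab : a < b) by (unfold a, b; pose proof (Rmax_r M d); destruct d; simpl in *; lra).
  assert (HQa : Q a).
  { apply Hd; [|exact Ha]. change (Rabs (a - 0) < d). rewrite Rminus_0_r, Rabs_right by lra.
    unfold a; destruct d; simpl; lra. }
  assert (HRb : R' b) by (apply HM; unfold b; pose proof (Rmax_l M d); lra).
  destruct (Hqr a b HQa HRb) as [y [Hy1 Hy2]]. simpl in Hy1, Hy2.
  change (Rabs (y - v) < - v / 2) in Hy2. apply Rabs_lt_between in Hy2.
  assert (Hex : ex_RInt h a b) by (exists y; exact Hy1).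
  apply (is_RInt_unique (V := R_CompleteNormedModule)) in Hy1.
  assert (0 <= RInt h a b).
  { apply RInt_ge_0; [lra | exact Hex |]. intros t Ht. apply Hh. lra. }
  lra.
Qed.

Lemma Rpower_le_exp x s : 0 < x -> Rpower x s * exp (- x) <= Rpower x s.
Proof.
  intros Hx. assert (exp (-x) < 1) by (rewrite <- exp_0; apply exp_increasing; lra).
  pose proof (Rpower_pos x s). pose proof (exp_pos (-x)). nra.
Qed.

Lemma gen_uniq (f : R -> R) l1 l2 :
  is_RInt_gen f (at_right 0) (Rbar_locally p_infty) l1 ->
  is_RInt_gen f (at_right 0) (Rbar_locally p_infty) l2 -> l1 = l2.
Proof.
  intros H1 H2.
  rewrite <- (@is_RInt_gen_unique R_CompleteNormedModule (at_right 0) (Rbar_locally p_infty)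
          (Proper_StrongProper _ (at_right_proper_filter 0))
          (Proper_StrongProper _ (Rbar_locally_filter p_infty)) f l1 H1).
  exact (@is_RInt_gen_unique R_CompleteNormedModule (at_right 0) (Rbar_locally p_infty)
          (Proper_StrongProper _ (at_right_proper_filter 0))
          (Proper_StrongProper _ (Rbar_locally_filter p_infty)) f l2 H2).
Qed.

Lemma Gamma_rec s : 0 < s -> Gamma (s + 1) = s * Gamma s.
Proof.
  intros Hs.
  destruct (Gamma_spec s Hs) as [_ H1].
  destruct (Gamma_spec (s+1) ltac:(lra)) as [_ H2].
  set (h := fun t => Rpower t s * exp (- t)).
  assert (Hd : forall x, 0 < x -> is_derive h x (s * fg s x - fg (s+1) x)).
  { intros x Hx. unfold h, fg. replace (s + 1 - 1) with s by ring.
    auto_derive.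
    - eexists; apply is_derive_Rpower; auto.
    - replace (Derive (fun x0 : R => Rpower x0 s) x) with (s * Rpower x (s-1))
        by (symmetry; apply is_derive_unique, is_derive_Rpower; auto). ring. }
  assert (HG : is_RInt_gen (fun t => s * fg s t - fg (s+1) t) (at_right 0) (Rbar_locally p_infty) (0 - 0)).
  { apply (is_RInt_gen_ext (Derive h)).
    { apply prod_pos. intros a b Ha Hb x Hx. simpl in Hx.
      assert (Rmin a b > 0) by (apply Rmin_glb_lt; lra).
      apply is_derive_unique, Hd. lra. }
    apply is_RInt_gen_Derive.
    + apply prod_pos. intros a b Ha Hb x Hx. simpl in Hx.
      assert (Rmin a b > 0) by (apply Rmin_glb_lt; lra).
      eexists. apply Hd. lra.
    + apply prod_pos. intros a b Ha Hb x Hx. simpl in Hx.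
      assert (Rmin a b > 0) by (apply Rmin_glb_lt; lra).
      apply (continuous_ext_loc (Derive h) (fun t => s * fg s t - fg (s+1) t) x).
      * assert (Hx2 : 0 < x/2) by lra. exists (mkposreal (x/2) Hx2). intros y Hy.
        change (Rabs (y - x) < x/2) in Hy. apply Rabs_lt_between in Hy.
        symmetry. apply is_derive_unique, Hd. lra.
      * apply (@ex_derive_continuous R_AbsRing R_NormedModule).
        unfold fg. auto_derive; repeat split; try (eexists; apply is_derive_Rpower; lra).
    + apply filterlim_locally. intros eps.
      assert (He : 0 < Rpower eps (1/s)) by apply Rpower_pos.
      exists (mkposreal _ He). intros y Hy Hy0. simpl in Hy.
      change (Rabs (y - 0) < Rpower eps (1/s)) in Hy.
      rewrite Rminus_0_r, Rabs_right in Hy by lra.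
      change (Rabs (h y - 0) < eps). rewrite Rminus_0_r.
      assert (0 < h y) by (unfold h; apply Rmult_lt_0_compat; [apply Rpower_pos|apply exp_pos]).
      rewrite Rabs_right by lra.
      assert (Rpower y s < Rpower (Rpower eps (1/s)) s) by (apply Rlt_Rpower_l; lra).
      rewrite Rpower_mult in H0. replace (1/s*s) with 1 in H0 by (field; lra).
      rewrite Rpower_1 in H0 by (destruct eps; simpl; lra).
      pose proof (Rpower_le_exp y s Hy0). unfold h. lra.
    + destruct (fg_bound (s+1)) as [C [HC HCb]].
      apply filterlim_locally. intros eps.
      exists (Rmax 1 (-2 * ln (eps / C))). intros x Hx.
      assert (H1x : 1 < x) by (pose proof (Rmax_l 1 (-2 * ln (eps / C))); lra).
      assert (H2x : -2 * ln (eps / C) < x) by (pose proof (Rmax_r 1 (-2 * ln (eps / C))); lra).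
      change (Rabs (h x - 0) < eps). rewrite Rminus_0_r.
      assert (0 < h x) by (unfold h; apply Rmult_lt_0_compat; [apply Rpower_pos|apply exp_pos]).
      rewrite Rabs_right by lra.
      specialize (HCb x ltac:(lra)). unfold fg in HCb. replace (s + 1 - 1) with s in HCb by ring.
      assert (exp (- x / 2) < eps / C).
      { rewrite <- (exp_ln (eps / C)) by (apply Rdiv_lt_0_compat; [destruct eps; simpl; lra| lra]).
        apply exp_increasing. lra. }
      unfold h. apply Rmult_lt_compat_l with (r := C) in H0; [|lra].
      replace (C * (eps / C)) with (pos eps) in H0 by (field; lra). lra. }
  pose proof (is_RInt_gen_minus _ _ _ _ (is_RInt_gen_scal _ s _ H1) H2) as H3.
  pose proof (gen_uniq _ _ _ HG H3) as E. simpl in E.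
  unfold minus, plus, opp, scal in E; simpl in E; unfold mult in E; simpl in E. lra.
Qed.

Lemma Gamma_CS u : 0 < u -> Gamma (u + 1/2) ^ 2 <= Gamma u * Gamma (u + 1).
Proof.
  intros Hu.
  destruct (Gamma_spec u Hu) as [HA H1].
  destruct (Gamma_spec (u+1/2) ltac:(lra)) as [HB H2].
  destruct (Gamma_spec (u+1) ltac:(lra)) as [HC H3].
  set (A := Gamma u) in *. set (B := Gamma (u+1/2)) in *. set (C := Gamma (u+1)) in *.
  set (l := B / A).
  pose proof (is_RInt_gen_plus _ _ _ _
               (is_RInt_gen_plus _ _ _ _ (is_RInt_gen_scal _ (l^2) _ H1) (is_RInt_gen_scal _ (-2*l) _ H2)) H3) as H4.
  apply RInt_gen_nonneg in H4.
  - simpl in H4. unfold plus, scal in H4; simpl in H4; unfold mult in H4; simpl in H4.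
    assert (E : l * (l * 1) * A + -2 * l * B + C = C - B^2 / A) by (unfold l; field; lra).
    rewrite E in H4.
    assert (B^2 / A <= C) by lra.
    apply Rmult_le_compat_l with (r := A) in H; [|lra].
    replace (A * (B^2/A)) with (B^2) in H by (field; lra). lra.
  - intros t Ht. simpl. unfold plus, scal; simpl; unfold mult; simpl.
    assert (Hsq : fg (u + 1/2) t ^ 2 = fg u t * fg (u+1) t).
    { unfold fg. replace (u + 1/2 - 1) with ((u-1)/2 + u/2) by field.
      replace (u + 1 - 1) with (u/2 + u/2) by field.
      replace (u - 1) with ((u-1)/2 + (u-1)/2) at 2 by field.
      rewrite !Rpower_plus. ring. }
    pose proof (fg_pos u t). pose proof (fg_pos (u+1/2) t). pose proof (fg_pos (u+1) t).
    assert (0 <= (l * fg u t - fg (u+1/2) t)^2) by apply pow2_ge_0.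
    assert (fg u t * (l ^ 2 * fg u t + -2 * l * fg (u + 1 / 2) t + fg (u + 1) t)
            = (l * fg u t - fg (u+1/2) t)^2).
    { replace ((l * fg u t - fg (u+1/2) t)^2) with
        (l^2 * fg u t^2 - 2*l*fg u t * fg (u+1/2) t + fg (u+1/2) t ^2) by ring.
      rewrite Hsq; ring. }
    nra.
Qed.

Lemma gamma_ratio : forall x, 1/2 < x ->
  0 < Gamma x /\ 0 < Gamma (x + 1/2) /\ x^2 * Gamma x ^2 <= (x+1/2) * Gamma (x+1/2)^2.
Proof.
  intros x Hx.
  destruct (Gamma_spec x ltac:(lra)) as [HA _].
  destruct (Gamma_spec (x + 1/2) ltac:(lra)) as [HB _].
  split; auto. split; auto.
  pose proof (Gamma_CS (x + 1/2) ltac:(lra)) as H.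
  replace (x + 1/2 + 1/2) with (x + 1) in H by field.
  replace (x + 1/2 + 1) with ((x + 1/2) + 1) in H by field.
  rewrite (Gamma_rec (x + 1/2)) in H by lra. rewrite (Gamma_rec x) in H by lra.
  nra.
Qed.

Lemma ln_lt_xm1 x : 0 < x -> x <> 1 -> ln x < x - 1.
Proof.
  intros Hx H1. pose proof (exp_ineq1 (ln x)) as H.
  rewrite exp_ln in H by lra. apply ln_neq_0 in H1; auto. specialize (H H1). lra.
Qed.


Lemma N0_gt1 g : 3/4 < g -> 1 < N0_gamma g.
Proof.
  intros Hg.
  set (x := 2*g-1).
  destruct (gamma_ratio x) as [HA [HB HAB]]; [unfold x; lra|].
  assert (E1 : 2*g - 1/2 = x + 1/2) by (unfold x; lra).
  assert (E2 : 2*g - 1 = x) by (unfold x; lra).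
  set (R := Gamma (2 * g - 1 / 2) / Gamma (2 * g - 1)).
  assert (HR : 0 < R) by (unfold R; rewrite E1, E2; apply Rdiv_lt_0_compat; lra).
  assert (HR2 : x^2 / (x+1/2) <= R^2).
  { unfold R; rewrite E1, E2.
    set (A := Gamma x) in *. set (B := Gamma (x+1/2)) in *.
    assert (H: (B/A)^2 - x^2/(x+1/2) = ((x+1/2)*B^2 - x^2*A^2)/((x+1/2)*A^2)).
    { field. split; apply Rgt_not_eq; unfold x in *; lra. }
    assert (0 <= ((x+1/2)*B^2 - x^2*A^2)/((x+1/2)*A^2)).
    { unfold Rdiv; apply Rmult_le_pos; [lra| left; apply Rinv_0_lt_compat].
      apply Rmult_lt_0_compat; [unfold x; lra| apply pow_lt; lra]. }
    lra. }
  assert (Hx : 1/2 < x) by (unfold x; lra).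
  assert (HlnR : 2 * ln x - ln (x + 1/2) <= 2 * ln R).
  { apply ln_le in HR2; [|apply Rdiv_lt_0_compat; [apply pow_lt|]; lra].
    unfold Rdiv in HR2. rewrite ln_mult, ln_Rinv, !ln_pow in HR2 by first [apply pow_lt; lra | apply Rinv_0_lt_compat; lra | lra].
    simpl INR in HR2. lra. }
  set (u := ln ((4*g-1)/(4*g-2))).
  assert (Hu : ln 2 + ln x + u = ln (4*g-1)).
  { unfold u. replace (4*g-1) with (2 * x * ((4*g-1)/(4*g-2))) at 2
      by (unfold x; field; apply Rgt_not_eq; lra).
    assert (0 < (4*g-1)/(4*g-2)) by (apply Rdiv_lt_0_compat; lra).
    rewrite !ln_mult; try lra; apply Rmult_lt_0_compat; lra. }
  assert (Hu2 : ln (x+1/2) = ln (4*g-1) - ln 2).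
  { replace (4*g-1) with (2 * (x+1/2)) by (unfold x; lra).
    rewrite ln_mult by lra. lra. }
  assert (Hu3 : (4*g-2) * u < 1).
  { assert (u < (4*g-1)/(4*g-2) - 1).
    { apply ln_lt_xm1. apply Rdiv_lt_0_compat; lra.
      intro H. assert ((4*g-1) = (4*g-2)) by (field_simplify_eq in H; lra). lra. }
    replace ((4*g-1)/(4*g-2) - 1) with (/(4*g-2)) in H by (field; lra).
    apply Rmult_lt_compat_l with (r := 4*g-2) in H; [|lra].
    rewrite Rinv_r in H by lra. exact H. }
  set (L := (1 - 3/(4*g)) * ln 2 + 1/(4*g) + (1 - 1/g) * ln x
            + - ((1 - 3/(4*g)) * ln (4*g-1)) + 1/(2*g) * ln R).
  assert (HL : 0 < L).
  { assert (0 < 4*g*L).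
    { assert (E : 4*g*L = 1 - ln x - (4*g-3)*u + 2 * ln R).
      { unfold L. rewrite <- Hu. field. lra. }
      rewrite E. rewrite Hu2, <- Hu in HlnR. nra. }
    nra. }
  assert (HN : N0_gamma g = exp L).
  { unfold N0_gamma, L, Rpower. fold R. rewrite E2.
    rewrite !exp_plus, exp_Ropp. unfold Rdiv. ring. }
  rewrite HN. rewrite <- exp_0. apply exp_increasing. exact HL.
Qed.

Lemma Rpower_lb y e : 0 < y -> 0 < e -> y * (1 - e * (y - 1)) <= Rpower y (1 - e).
Proof.
  intros Hy He.
  replace (1 - e) with (1 + - e) by ring. rewrite Rpower_plus, Rpower_1 by lra.
  apply Rmult_le_compat_l; [lra|].
  unfold Rpower. pose proof (exp_ineq1_le (- e * ln y)). pose proof (ln_le_xm1 y Hy).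
  nra.
Qed.

Lemma F0_cont g x : 0 < x -> continuity_pt (F0 g) x.
Proof.
  intros Hx. apply continuity_pt_filterlim. apply (ex_derive_continuous (F0 g)).
  unfold F0. auto_derive. exists (((beta0 g + 1) * Rpower x (beta0 g + 1 - 1))).
  apply is_derive_Reals; apply derivable_pt_lim_power; lra.
Qed.

Lemma main_alg g (Hg : 3/4 < g) (HN : 1 < N0_gamma g) :
  let D := 2 * (g - 1 / 4) * Rpower (N0_gamma g) (4 * g / (4 * g - 1)) - 2 * (g - 3 / 4) in
  0 < x0_star g < D.
Proof.
  intros D.
  set (N := N0_gamma g) in *.
  set (b := beta0 g).
  assert (Hb : b = 1 - 1/(4*g)) by reflexivity.
  assert (Hb0 : 0 < b < 1). { rewrite Hb. split; [|assert (0 < 1/(4*g)) by (apply Rdiv_lt_0_compat; lra)]; try lra.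
     assert (1/(4*g) < 1) by (apply Rmult_lt_reg_r with (4*g); [lra|]; field_simplify; lra). lra. }
  set (a := Rpower N (1/b)).
  assert (Ha : a = Rpower N (4 * g / (4 * g - 1))).
  { unfold a. f_equal. rewrite Hb. field. lra. }
  assert (Ha1 : 1 < a).
  { unfold a. assert (0 < 1/b) by (apply Rdiv_lt_0_compat; lra).
    pose proof (Rpower_lt N 0 (1/b) HN H). rewrite Rpower_O in H0 by lra. exact H0. }
  assert (HaN : Rpower a b = N).
  { unfold a. rewrite Rpower_mult. replace (1/b*b) with 1 by (field; lra). apply Rpower_1; lra. }
  unfold D; clear D. rewrite <- Ha. set (D := 2 * (g - 1 / 4) * a - 2 * (g - 3 / 4)).
  assert (HDa : a < D). { unfold D. nra. }
  assert (HFa : F0 g a < 0).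
  { unfold F0. fold N b. rewrite Rpower_plus. rewrite Rpower_1 by lra. rewrite HaN. assert (0 < (4*g-3)*N*(a-1)) by (apply Rmult_lt_0_compat; [apply Rmult_lt_0_compat|]; lra). nra. }
  assert (HFD : 0 < F0 g D).
  { unfold F0. fold N b. rewrite Rpower_plus, Rpower_1 by lra.
    set (y := D / a).
    assert (Hy : D = y * a) by (unfold y; field; lra).
    assert (Hy0 : 0 < y) by (unfold y; apply Rdiv_lt_0_compat; lra).
    assert (HDb : Rpower D b = Rpower y b * N).
    { rewrite Hy, <- Rpower_mult_distr, HaN by lra. reflexivity. }
    rewrite HDb.
    assert (Hlb := Rpower_lb y (1/(4*g)) Hy0 ltac:(apply Rdiv_lt_0_compat; lra)).
    rewrite <- Hb in Hlb.
    set (h := g - 3/4). set (s := a - 1).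
    assert (Hpoly : 4 * g * D * (y * (1 - 1 / (4 * g) * (y - 1))) - (8*g-3) * D + (4*g-3)
                  = s^2 * (4*h^2 + 16*h^3 + (4*h^2+8*h^3)*s) / a^2).
    { unfold y, h, s. unfold D. field. split; lra. }
    assert (Hpos : 0 < s^2 * (4*h^2 + 16*h^3 + (4*h^2+8*h^3)*s) / a^2).
    { assert (0 < s) by (unfold s; lra). assert (0 < h) by (unfold h; lra).
      assert (0 < h^2) by (apply pow_lt; lra). assert (0 < h^3) by (apply pow_lt; lra).
      assert (0 < (4*h^2+8*h^3)*s) by (apply Rmult_lt_0_compat; lra).
      apply Rdiv_lt_0_compat; [|apply pow_lt; lra].
      apply Rmult_lt_0_compat; [apply pow_lt; lra|]. lra. }
    assert (HDpos : 0 < D) by lra.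
    assert (0 < N) by lra.
    assert (4 * g * (Rpower y b * N * D) >= 4*g*D*N * (y * (1 - 1 / (4 * g) * (y - 1)))).
    { assert (0 < 4*g*D*N). { apply Rmult_lt_0_compat; [apply Rmult_lt_0_compat|]; [apply Rmult_lt_0_compat| |]; lra. }
      replace (4 * g * (Rpower y b * N * D)) with (4*g*D*N * Rpower y b) by ring.
      apply Rle_ge, Rmult_le_compat_l; lra. }
    nra. }
  destruct (Ranalysis5.IVT_interv (F0 g) a D) as [r [Hr1 Hr2]]; auto.
  { intros z Hz. apply F0_cont. lra. }
  assert (Hr3 : a < r < D).
  { split; destruct Hr1 as [H1 H2]; destruct H1; auto; destruct H2; auto; subst; lra. }
  assert (HS : x0_roots g r) by (split; [fold N b a|]; lra).
  destruct (Glb_Rbar_correct (x0_roots g)) as [Hlb Hglb].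
  assert (Hlo : Rbar_le a (Glb_Rbar (x0_roots g))).
  { apply Hglb. intros z [Hz _]. simpl. fold N b a in Hz. lra. }
  assert (Hhi := Hlb r HS).
  unfold x0_star. destruct (Glb_Rbar (x0_roots g)) as [z| |]; simpl in *; try contradiction; lra.
Qed.

Theorem proposition3 (d : nat) (g : R) (Hd : (2 <= d)%nat) (Hg : 3 / 4 < g) :
  Lambda0 g d >
  (INR d - 1) * (g - 3 / 4) /
  (2 * (g - 1 / 4) * Rpower (N0_gamma g) (4 * g / (4 * g - 1)) - 2 * (g - 3 / 4)).
Proof.
  pose proof (main_alg g Hg (N0_gt1 g Hg)) as [H1 H2]. cbv zeta in H2.
  unfold Lambda0.
  assert (Hd2 : 2 <= INR d) by (replace 2 with (INR 2) by (simpl; ring); apply le_INR; exact Hd).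
  assert (HK : 0 < (INR d - 1) * (g - 3/4)) by (apply Rmult_lt_0_compat; lra).
  unfold Rdiv. apply Rlt_gt. apply Rmult_lt_compat_l; [exact HK|].
  apply Rinv_lt_contravar; [apply Rmult_lt_0_compat|]; lra.
Qed.
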